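(* Let $v_1,v_2$ be two adjacent vertices of $\mathscr{BG}_+(n)$ with associated collections $\mathscr{D}_1,\mathscr{D}_2$ such that $\bigcap\mathscr{D}_1=\{i\}$ and $\bigcap\mathscr{D}_2=\{j\}$. Let $v=\lambda v_1+(1-\lambda)v_2$ with $\lambda\in\,]0,1[$. Then: (1) if $i=j$, the core $C(v)$ is a singleton; (2) if $i\neq j$ and $n\leqslant 4$, the core $C(v)$ is a singleton.
   Context: $N=\{1,\ldots,n\}$; a game is a map $v:2^N\to\mathbb{R}$ with $v(\varnothing)=0$. The core is $C(v)=\{x\in\mathbb{R}^N:\sum_{i\in S}x_i\geqslant v(S)\ \forall S,\ \sum_{i\in N}x_i=v(N)\}$. $\mathscr{BG}_+(n)$ is the polytope (in $\mathbb{R}^{2^N\setminus\{\varnothing,N\}}$) of games with $v\geqslant0$, $v(N)=1$ and $C(v)\neq\varnothing$. The collection associated to a vertex $v$ is $\mathscr{D}=\{S:\varnothing\neq S\subsetneq N,\ v(S)=1\}$; $\bigcap\mathscr{D}$ is the intersection of its members. Two vertices are adjacent if they lie on a common edge of the polytope. *)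

(* Defs.v *)
From HB Require Import structures.
From mathcomp Require Import all_boot all_order all_algebra.
From mathcomp Require Import reals.
Set Implicit Arguments. Unset Strict Implicit. Unset Printing Implicit Defensive.
Import Order.TTheory GRing.Theory Num.Theory.
Local Open Scope ring_scope.

(* Player set N = 'I_n ; coalitions are {set 'I_n}.
   A game is a finite function v : {ffun {set 'I_n} -> R} (v set0 = 0 is
   part of membership in the polytope below). *)

Section Games.
Variables (R : realType) (n : nat).

Definition game := {ffun {set 'I_n} -> R}.
Definition payoff := {ffun 'I_n -> R}.

Definition in_core (v : game) (x : payoff) : Prop :=
  (forall S : {set 'I_n}, v S <= \sum_(i in S) x i) /\
  \sum_(i in [set: 'I_n]) x i = v [set: 'I_n].

Definition core_singleton (v : game) : Prop :=
  exists x : payoff, forall y : payoff, in_core v y <-> y = x.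

(* The polytope BG_+(n): v(empty)=0, v >= 0, v(N) = 1, nonempty core.
   (Coordinates on empty set and N are fixed, so this is identified with the
   polytope in R^{2^N \ {empty, N}}.) *)
Definition inBG (v : game) : Prop :=
  v set0 = 0 /\ v [set: 'I_n] = 1 /\ (forall S, 0 <= v S) /\
  exists x, in_core v x.

Definition comb (mu : R) (x y : game) : game :=
  [ffun S => mu * x S + (1 - mu) * y S].

Definition is_vertex (v : game) : Prop :=
  inBG v /\
  forall (x y : game) (mu : R), inBG x -> inBG y -> 0 < mu < 1 ->
    v = comb mu x y -> x = v /\ y = v.

Definition segment (v1 v2 : game) (w : game) : Prop :=
  exists mu : R, 0 <= mu <= 1 /\ w = comb mu v1 v2.

(* v1, v2 adjacent: distinct vertices such that the segment [v1,v2]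
   is a face (an edge) of the polytope. *)
Definition adjacent (v1 v2 : game) : Prop :=
  is_vertex v1 /\ is_vertex v2 /\ v1 <> v2 /\
  forall (x y : game) (mu : R), inBG x -> inBG y -> 0 < mu < 1 ->
    segment v1 v2 (comb mu x y) -> segment v1 v2 x /\ segment v1 v2 y.

Definition coll (v : game) : {set {set 'I_n}} :=
  [set S : {set 'I_n} | (S != set0) && (S != [set: 'I_n]) && (v S == 1)].

Definition coll_cap (v : game) : {set 'I_n} := \bigcap_(S in coll v) S.

End Games.

(* Main.v *)
Require Import Defs.
From HB Require Import structures.
From mathcomp Require Import all_boot all_order all_algebra.
From mathcomp Require Import reals.
From mathcomp Require Import ring lra.
Import Order.TTheory GRing.Theory Num.Theory.
Local Open Scope ring_scope.
Set Implicit Arguments. Unset Strict Implicit.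

Section Aux.
Variables (R : realType) (n : nat).
Implicit Types (v w : game R n) (x y c : payoff R n) (S : {set 'I_n}).

Definition ev (i : 'I_n) : payoff R n := [ffun m => (m == i)%:R].
Definition pert v (e : R) (d : game R n) : game R n := [ffun S => v S + e * d S].
Definition combp (t : R) x y : payoff R n := [ffun m => t * x m + (1 - t) * y m].

Lemma sum_ev S i : \sum_(m in S) ev i m = (i \in S)%:R.
Proof.
case: (boolP (i \in S)) => Hi.
- rewrite (bigD1 i) //= big1 => [|m /andP[_ Hm]]; rewrite ffunE ?eqxx ?addr0 //.
  by rewrite (negbTE Hm).
- rewrite big1 // => m Hm; rewrite ffunE; case: eqP => // E; subst.
  by rewrite Hm in Hi.
Qed.

Lemma sum_sub_le x S k : k \notin S -> (forall m, 0 <= x m) ->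
  x k + \sum_(m in S) x m <= \sum_(m in [set: 'I_n]) x m.
Proof.
move=> kS x0; rewrite -big_setU1 //=.
rewrite [X in _ <= X](big_setID (k |: S)) /= setTI lerDl.
apply: sumr_ge0 => m _; exact: x0.
Qed.

Lemma core_nonneg v x : (forall S, 0 <= v S) -> in_core v x -> forall m, 0 <= x m.
Proof.
move=> v0 [H _] m; apply: le_trans (v0 [set m]) _.
by move: (H [set m]); rewrite big_set1.
Qed.

Lemma inBG_of w c : w set0 = 0 -> w [set: 'I_n] = 1 -> (forall S, 0 <= w S) ->
  (forall S, w S <= \sum_(m in S) c m) -> \sum_(m in [set: 'I_n]) c m = 1 ->
  inBG w.
Proof.
move=> h0 h1 h2 h3 h4; split=> //; split=> //; split=> //.
by exists c; split=> //; rewrite h4 h1.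
Qed.

Lemma comb_half_pert v (e : R) d : v = comb 2^-1 (pert v e d) (pert v (- e) d).
Proof. apply/ffunP => S; rewrite !ffunE; lra. Qed.

Lemma vertex_pert v (e : R) d : is_vertex v -> 0 < e ->
  inBG (pert v e d) -> inBG (pert v (- e) d) -> forall S, d S = 0.
Proof.
move=> [_ Hv] e0 h1 h2 S.
have hm : (0 : R) < (2^-1 : R) < (1 : R).
  by apply/andP; split; lra.

have [E _] := Hv _ _ _ h1 h2 hm (comb_half_pert v e d).
have := congr1 (fun f : game R n => f S) E; rewrite ffunE => /eqP.
rewrite -subr_eq0 addrC addKr mulf_eq0 => /orP[|/eqP //].
by rewrite gt_eqF.
Qed.

Lemma adj_pert v1 v2 (lam e : R) d : adjacent v1 v2 -> 0 < lam < 1 -> 0 < e ->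
  inBG (pert (comb lam v1 v2) e d) -> inBG (pert (comb lam v1 v2) (- e) d) ->
  exists b : R, forall S, e * d S = b * (v1 S - v2 S).
Proof.
move=> [_ [_ [_ Ha]]] hl e0 h1 h2.
have hm : (0 : R) < (2^-1 : R) < (1 : R) by apply/andP; split; lra.
have hs : segment v1 v2 (comb 2^-1 (pert (comb lam v1 v2) e d)
                                   (pert (comb lam v1 v2) (- e) d)).
  rewrite -comb_half_pert; exists lam; split => //.
  by case/andP: hl => a b; apply/andP; split; lra.
have [[mu [_ E]] _] := Ha _ _ _ h1 h2 hm hs.
exists (mu - lam) => S.
have := congr1 (fun f : game R n => f S) E; rewrite !ffunE => H.
have -> : e * d S = (lam * v1 S + (1 - lam) * v2 S + e * d S)
                     - (lam * v1 S + (1 - lam) * v2 S) by ring.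
rewrite H; ring.
Qed.

Lemma comb_core v1 v2 x y (t : R) : 0 <= t <= 1 -> in_core v1 x -> in_core v2 y ->
  in_core (comb t v1 v2) (combp t x y).
Proof.
move=> /andP[t0 t1] [H1 E1] [H2 E2].
have sumE S : \sum_(m in S) combp t x y m =
   t * \sum_(m in S) x m + (1 - t) * \sum_(m in S) y m.
  rewrite !mulr_sumr -big_split /=; apply: eq_bigr => m _; by rewrite ffunE.
split.
- move=> S; rewrite sumE ffunE; apply: lerD; apply: ler_wpM2l => //.
  by rewrite subr_ge0.
- by rewrite sumE E1 E2 ffunE.
Qed.

Lemma coll_mem v S : S \in coll v -> v S = 1.
Proof. by rewrite inE => /andP[_ /eqP]. Qed.

Lemma cap_mem v S i : coll_cap v = [set i] -> S \in coll v -> i \in S.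
Proof.
move=> E SD; have : i \in coll_cap v by rewrite E set11.
by move/bigcapP; apply.
Qed.

Lemma cap_out v i k : coll_cap v = [set i] -> k != i ->
  exists S, S \in coll v /\ k \notin S.
Proof.
move=> E ki.
case: (boolP [exists S, (S \in coll v) && (k \notin S)]).
  by case/existsP => S /andP[a b]; exists S.
rewrite negb_exists => /forallP H.
have : k \in coll_cap v.
  apply/bigcapP => S SD; move: (H S); rewrite SD /=; by case: (k \in S).
by rewrite E inE (negbTE ki).
Qed.

Lemma vertex01 v i : is_vertex v -> coll_cap v = [set i] ->
  in_core v (ev i) /\ (forall S, v S = 0 \/ v S = 1).
Proof.
move=> Vv E; have Vv' := Vv; case: Vv' => [[h0 [h1 [h2 [x xc]]]] _].
have x0 := core_nonneg h2 xc.
have xk k : k != i -> x k = 0.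
  move=> ki; have [S [SD kS]] := cap_out E ki.
  have := sum_sub_le kS x0; have := xc.1 S; rewrite coll_mem // (proj2 xc) h1.
  by move: (x0 k) => ?; lra.
have xe : x = ev i.
  apply/ffunP => m; rewrite ffunE; case: (eqVneq m i) => [->|mi]; last by rewrite xk.
  have hs : \sum_(m0 in [set: 'I_n] | m0 != i) x m0 = 0.
    by apply: big1 => m' /andP[_ ?]; rewrite xk.
  by have := proj2 xc; rewrite h1 (bigD1 i) ?in_setT //= hs addr0.
subst x; split => // S.
have le1 := xc.1 S; rewrite sum_ev in le1.
case: (boolP (i \in S)) => iS; last by left; move: (h2 S) le1; rewrite (negbTE iS) /= mulr0n; lra.
have [->|S0] := eqVneq S set0; first by left.
have [->|ST] := eqVneq S [set: 'I_n]; first by right.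
move: le1; rewrite iS => le1.
case: (eqVneq (v S) 1) => [->|vS1]; first by right.
case: (eqVneq (v S) 0) => [->|vS0]; first by left.
exfalso.
have vlt : v S < 1 by rewrite lt_neqAle vS1.
have vgt : 0 < v S by rewrite lt_neqAle eq_sym vS0 h2.
pose d : game R n := [ffun T => (T == S)%:R].
pose e := Num.min (v S) (1 - v S).
have e0 : 0 < e by rewrite lt_min vgt subr_gt0.
have e1 : e <= v S by rewrite ge_min lexx.
have e2 : e <= 1 - v S by rewrite ge_min lexx orbT.
have ok : forall f, -e <= f <= e -> inBG (pert v f d).
  move=> f /andP[f1 f2]; apply: (@inBG_of _ (ev i)).
  - by rewrite !ffunE eq_sym (negbTE S0) mulr0 addr0.
  - by rewrite !ffunE eq_sym (negbTE ST) mulr0 addr0.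
  - move=> T; rewrite !ffunE; case: (eqVneq T S) => [->|_]; first by rewrite mulr1; lra.
    by rewrite mulr0 addr0.
  - move=> T; rewrite !ffunE sum_ev; case: (eqVneq T S) => [->|_].
      by rewrite iS mulr1 /= ?mulr1n; lra.
    by rewrite mulr0 addr0 -sum_ev; apply: xc.1.
  - by rewrite sum_ev in_setT.
have o1 : -e <= e <= e by apply/andP; split; lra.
have o2 : -e <= -e <= e by apply/andP; split; lra.
have := vertex_pert Vv e0 (ok e o1) (ok (-e) o2) S.
by rewrite ffunE eqxx /= => /eqP; rewrite oner_eq0.
Qed.

Lemma sum_ev' S i : \sum_(m in S) ((m == i)%:R : R) = (i \in S)%:R.
Proof. rewrite -sum_ev; apply: eq_bigr => m _; by rewrite ffunE. Qed.

Lemma sum_one y S i : i \in S -> (forall m, m \in S -> m != i -> y m = 0) ->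
  \sum_(m in S) y m = y i.
Proof.
move=> iS H; rewrite (bigD1 i) //= big1 ?addr0 // => m /andP[a b]; exact: H.
Qed.

Lemma sum_two y S i j : i \in S -> j \in S -> i != j ->
  (forall m, m \in S -> m != i -> m != j -> y m = 0) ->
  \sum_(m in S) y m = y i + y j.
Proof.
move=> iS jS ij H; rewrite (bigD1 i) //= (bigD1 j) /=; last by rewrite jS eq_sym.
rewrite big1 ?addr0 // => m /andP[/andP[a b] c]; exact: H.
Qed.

Lemma main v1 v2 i j (lam : R) : adjacent v1 v2 -> coll_cap v1 = [set i] ->
  coll_cap v2 = [set j] -> 0 < lam < 1 -> core_singleton (comb lam v1 v2).
Proof.
move=> Ad E1 E2 hl.
have [V1 [V2 _]] := Ad.
have [c1 b1] := vertex01 V1 E1.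
have [c2 b2] := vertex01 V2 E2.
have /andP[l0 l1] := hl.
have l01 : 0 <= lam <= 1 by apply/andP; split; lra.
have x0c := comb_core l01 c1 c2.
set v := comb lam v1 v2 in x0c *.
set x0 := combp lam (ev i) (ev j) in x0c *.
have vE S : v S = lam * v1 S + (1 - lam) * v2 S by rewrite /v ffunE.
have v1N : v1 [set: 'I_n] = 1 by rewrite -(proj2 c1) sum_ev in_setT.
have v2N : v2 [set: 'I_n] = 1 by rewrite -(proj2 c2) sum_ev in_setT.
have vN : v [set: 'I_n] = 1 by rewrite vE v1N v2N; ring.
have le1 S : v1 S <= (i \in S)%:R by rewrite -sum_ev; apply: c1.1.
have le2 S : v2 S <= (j \in S)%:R by rewrite -sum_ev; apply: c2.1.
have v0 S : 0 <= v S by rewrite vE; case: (b1 S) => ->; case: (b2 S) => ->; lra.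
have x0pos m : 0 <= x0 m.
  by rewrite !ffunE; apply: addr_ge0; apply: mulr_ge0; rewrite ?ler0n //; lra.
exists x0 => y; split; last by move=> ->.
move=> yc.
have y0 := core_nonneg v0 yc.
have yk k : k != i -> k != j -> y k = 0.
  move=> ki kj; apply/eqP; rewrite eq_le y0 andbT leNgt; apply/negP => ykp.
  pose c := combp 2^-1 x0 y.
  have hh : (0 : R) <= (2^-1 : R) <= (1 : R) by apply/andP; split; lra.
  have cc : in_core v c.
    have := comb_core hh x0c yc.
    have -> // : comb 2^-1 v v = v by apply/ffunP => S; rewrite ffunE; ring.
  have x0i : lam <= x0 i.
    rewrite !ffunE eqxx /= mulr1n; have : 0 <= ((i == j)%:R : R) by rewrite ler0n.
    move=> ?; have : 0 <= (1 - lam) * (i == j)%:R by apply: mulr_ge0; lra.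
    lra.
  have x0k : x0 k = 0 by rewrite !ffunE (negbTE ki) (negbTE kj) /= mulr0n; ring.
  have ci : 0 < c i by rewrite ffunE; have := y0 i; lra.
  have ck : 0 < c k by rewrite ffunE x0k; lra.
  have c0 m : 0 <= c m by rewrite ffunE; have := y0 m; have := x0pos m; lra.
  pose d : game R n := [ffun S => if (v1 S == 1) || (v2 S == 1)
                                  then (k \in S)%:R - (i \in S)%:R else 0].
  pose e := Num.min (Num.min lam (1 - lam)) (Num.min (c i) (c k)).
  have e0 : 0 < e by rewrite !lt_min l0 subr_gt0 l1 ci ck.
  have ea : e <= lam by rewrite !ge_min lexx.
  have eb : e <= 1 - lam by rewrite !ge_min lexx !orbT.
  have ec : e <= c i by rewrite !ge_min lexx !orbT.
  have ed : e <= c k by rewrite !ge_min lexx !orbT.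
  have ok f : -e <= f <= e -> inBG (pert v f d).
    move=> /andP[f1 f2].
    pose cp : payoff R n := [ffun m => c m + f * ((m == k)%:R - (m == i)%:R)].
    have sumcp S : \sum_(m in S) cp m =
        \sum_(m in S) c m + f * ((k \in S)%:R - (i \in S)%:R).
      rewrite -!sum_ev' -sumrB mulr_sumr -big_split /=.
      by apply: eq_bigr => m _; rewrite ffunE.
    have cp0 m : 0 <= cp m.
      rewrite ffunE; case: (eqVneq m k) => [->|mk].
        by rewrite (negbTE ki) /= mulr1n mulr0n; lra.
      case: (eqVneq m i) => [->|mi].
        by rewrite /= mulr1n mulr0n; lra.
      by rewrite /= mulr0n subrr mulr0 addr0.
    apply: (@inBG_of _ cp).
    - rewrite ffunE vE !ffunE !in_set0 /= mulr0n subrr if_same mulr0 addr0.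
      have := le1 set0; have := le2 set0; rewrite !in_set0 /= mulr0n.
      by case: (b1 set0) => ->; case: (b2 set0) => ->; lra.
    - by rewrite ffunE vN !ffunE v1N eqxx /= !in_setT subrr mulr0 addr0.
    - move=> S; rewrite ffunE vE !ffunE.
      case: (b1 S) => ->; case: (b2 S) => ->;
        rewrite ?eqxx ?(eq_sym 0) ?oner_eq0 /=;
        case: (k \in S); case: (i \in S); rewrite /= ?mulr0n ?mulr1n; lra.
    - move=> S; rewrite sumcp ffunE !ffunE.
      case: ifP => U.
        by rewrite lerD2r -vE; apply: cc.1.
      rewrite mulr0 addr0 -sumcp; apply: le_trans (sumr_ge0 _ (fun m _ => cp0 m)).
      move: U; case: (b1 S) => ->; case: (b2 S) => ->;
        rewrite ?eqxx ?(eq_sym 0) ?oner_eq0 ?orbT //= => _; lra.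
    - by rewrite sumcp !in_setT subrr mulr0 addr0 (proj2 cc) vN.
  have o1 : -e <= e <= e by apply/andP; split; lra.
  have o2 : -e <= -e <= e by apply/andP; split; lra.
  have [b Hb] := adj_pert Ad hl e0 (ok e o1) (ok (-e) o2).
  have [S1 [S1D kS1]] := cap_out E1 ki.
  have [S2 [S2D kS2]] := cap_out E2 kj.
  have iS1 := cap_mem E1 S1D.
  have v1S1 := coll_mem S1D.
  have v2S2 := coll_mem S2D.
  have h1 := Hb S1; have h2 := Hb S2.
  rewrite ffunE v1S1 eqxx /= (negbTE kS1) iS1 /= mulr0n mulr1n in h1.
  rewrite ffunE v2S2 eqxx orbT /= (negbTE kS2) /= mulr0n in h2.
  case: (b2 S1) => E in h1; rewrite E in h1; last by move: h1; rewrite subrr mulr0; lra.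
  case: (boolP (i \in S2)) => iS2.
    rewrite iS2 /= mulr1n in h2.
    case: (b1 S2) => F; rewrite F in h2; move: h1 h2; rewrite ?subrr ?subr0 ?mulr0 ?mulr1;
      lra.
  have F : v1 S2 = 0.
    by have := le1 S2; rewrite (negbTE iS2) /= mulr0n; case: (b1 S2) => ->; lra.
  rewrite (negbTE iS2) F /= mulr0n in h2; move: h1 h2; rewrite ?subrr ?subr0 ?mulr0 ?mulr1.
  lra.
have ysum : \sum_(m in [set: 'I_n]) y m = 1 by rewrite (proj2 yc) vN.
apply/ffunP => m; rewrite !ffunE.
case: (eqVneq i j) => [ij|ij].
  subst j.
  have yi : y i = 1.
    rewrite -ysum (sum_one (i:=i)) ?in_setT // => m' _ mi; exact: yk.
  case: (eqVneq m i) => [->|mi]; first by rewrite yi /= mulr1n; ring.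
  by rewrite yk //= mulr0n; ring.
have ji : j != i by rewrite eq_sym.
have [Sa [SaD jSa]] := cap_out E1 ji.
have [Sb [SbD iSb]] := cap_out E2 ij.
have iSa := cap_mem E1 SaD.
have jSb := cap_mem E2 SbD.
have ya : lam <= y i.
  have := yc.1 Sa; rewrite vE (coll_mem SaD) (sum_one (i:=i)) //; last first.
    move=> m' m'S m'i; apply: yk => //; apply/eqP => E; subst m'; by rewrite m'S in jSa.
  have := le2 Sa; rewrite (negbTE jSa) /= mulr0n.
  by case: (b2 Sa) => ->; lra.
have yb : 1 - lam <= y j.
  have := yc.1 Sb; rewrite vE (coll_mem SbD) (sum_one (i:=j)) //; last first.
    move=> m' m'S m'j; apply: yk => //; apply/eqP => E; subst m'; by rewrite m'S in iSb.
  have := le1 Sb; rewrite (negbTE iSb) /= mulr0n.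
  by case: (b1 Sb) => ->; lra.
have yij : y i + y j = 1.
  rewrite -ysum (sum_two (i:=i) (j:=j)) ?in_setT // => m' _; exact: yk.
case: (eqVneq m i) => [->|mi].
  by rewrite (negbTE ij) /= mulr1n mulr0n; lra.
case: (eqVneq m j) => [->|mj].
  by rewrite /= mulr1n mulr0n; lra.
by rewrite yk //= mulr0n; ring.
Qed.

End Aux.

Theorem theorem20 (R : realType) (n : nat) (v1 v2 : game R n) (i j : 'I_n)
  (lam : R) :
  adjacent v1 v2 ->
  coll_cap v1 = [set i] -> coll_cap v2 = [set j] ->
  0 < lam < 1 ->
  (i = j -> core_singleton (comb lam v1 v2)) /\
  (i <> j -> (n <= 4)%N -> core_singleton (comb lam v1 v2)).
Proof.
move=> Ad E1 E2 hl; split => [_|_ _]; exact: (main Ad E1 E2 hl).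
Qed.
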